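(* Let $F$ be a positive integer. (1) $\#(\mathrm{C}(F)\setminus\theta(\mathrm{C}(F)))=\lfloor\frac{F-1}{2}\rfloor$. (2) If $P,Q$ are irreducible numerical semigroups with Frobenius number $F$ such that $\mathrm{m}(Q)<\frac{F}{2}$ and $P=(Q\setminus\{\mathrm{m}(Q)\})\cup\{F-\mathrm{m}(Q)\}$ (i.e. $Q$ is a child of $P$ in the tree $\mathrm{G}(\mathcal{I}(F))$), then $\#(Q\setminus\theta(Q))<\#(P\setminus\theta(P))$.
   Context: A numerical semigroup is a subset $S\subseteq\mathbb{N}$ closed under addition with $0\in S$ and $\mathbb{N}\setminus S$ finite; $\mathrm{F}(S)=\max(\mathbb{Z}\setminus S)$; $\mathrm{m}(S)=\min(S\setminus\{0\})$; $\langle X\rangle$ is the submonoid generated by $X$. Irreducible: not the intersection of two numerical semigroups properly containing it. $\Delta(S)=\{s\in S\mid s<\frac{\mathrm{F}(S)}{2}\}$, $\theta(S)=\langle\Delta(S)\rangle\cup\{\mathrm{F}(S)+1,\mathrm{F}(S)+2,\ldots\}$. $\mathrm{C}(F)=\{0\}\cup\{x\in\mathbb{N}\mid x\ge\frac{F+1}{2}\}\setminus\{F\}$ if $F$ is odd and $\mathrm{C}(F)=\{0\}\cup\{x\in\mathbb{N}\mid x\ge\frac{F}{2}+1\}\setminus\{F\}$ if $F$ is even (the unique irreducible numerical semigroup with Frobenius number $F$ and multiplicity greater than $F/2$). $\mathcal{I}(F)$ is the set of irreducible numerical semigroups with Frobenius number $F$, and $\mathrm{G}(\mathcal{I}(F))$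 is the graph on $\mathcal{I}(F)$ with an edge $(T,S)$ whenever $\mathrm{m}(T)<\frac{F}{2}$ and $S=(T\setminus\{\mathrm{m}(T)\})\cup\{F-\mathrm{m}(T)\}$. *)

(* Defs.v *)
From mathcomp Require Import all_boot.
Set Implicit Arguments. Unset Strict Implicit. Unset Printing Implicit Defensive.

Definition natset := nat -> Prop.

Definition numerical (S : natset) : Prop :=
  S 0 /\ (forall x y, S x -> S y -> S (x + y)) /\
  exists N, forall x, N <= x -> S x.

Definition frobenius (S : natset) (F : nat) : Prop :=
  ~ S F /\ forall x, F < x -> S x.

Definition multiplicity (S : natset) (m : nat) : Prop :=
  S m /\ 0 < m /\ forall x, S x -> 0 < x -> m <= x.

Definition irreducible (S : natset) : Prop :=
  numerical S /\
  ~ (exists S1 S2 : natset, numerical S1 /\ numerical S2 /\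
       (forall x, S x -> S1 x) /\ (exists x, S1 x /\ ~ S x) /\
       (forall x, S x -> S2 x) /\ (exists x, S2 x /\ ~ S x) /\
       (forall x, S x <-> S1 x /\ S2 x)).

Definition gen (X : natset) : natset :=
  fun x => exists s : seq nat, (forall y, y \in s -> X y) /\ sumn s = x.

Definition Delta (S : natset) : natset :=
  fun s => S s /\ exists F, frobenius S F /\ 2 * s < F.

Definition theta (S : natset) : natset :=
  fun x => gen (Delta S) x \/ exists F, frobenius S F /\ F < x.

Definition CF (F : nat) : natset :=
  fun x => x = 0 \/
    (x <> F /\ (if odd F then F + 1 <= 2 * x else F + 2 <= 2 * x)).

Definition card_is (A : natset) (n : nat) : Prop :=
  exists s : seq nat, uniq s /\ size s = n /\ forall x, x \in s <-> A x.

Definition setdiff (A B : natset) : natset := fun x => A x /\ ~ B x.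

(* Main.v *)
Require Import Defs.
From mathcomp Require Import all_boot.
From Stdlib Require Import ClassicalEpsilon.
From mathcomp Require Import zify.
Set Implicit Arguments. Unset Strict Implicit.

Definition dec (P : Prop) : bool := if excluded_middle_informative P then true else false.

Lemma frob_uniq S F1 F2 : frobenius S F1 -> frobenius S F2 -> F1 = F2.
Proof.
move=> [n1 h1] [n2 h2]; case: (ltngtP F1 F2) => // H.
- by case: n2; apply: h1.
- by case: n1; apply: h2.
Qed.

Lemma gen_in (X S : natset) x : gen X x -> (forall y, X y -> S y) -> numerical S -> S x.
Proof.
move=> [s [Hs <-]] HXS [H0 [Hadd _]]; elim: s Hs => [|a s IH] Hs //=.
apply: Hadd; first by apply: HXS; apply: Hs; rewrite inE eqxx.
by apply: IH => y hy; apply: Hs; rewrite inE hy orbT.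
Qed.

Lemma gen_zero (X : natset) x : gen X x -> (forall y, X y -> y = 0) -> x = 0.
Proof.
move=> [s [Hs <-]] HX; elim: s Hs => [|a s IH] Hs //=.
rewrite (HX a); last by apply: Hs; rewrite inE eqxx.
by rewrite IH // => y hy; apply: Hs; rewrite inE hy orbT.
Qed.

Lemma gen_mono (X Y : natset) x : gen X x -> (forall y, X y -> Y y) -> gen Y x.
Proof. by move=> [s [Hs E]] H; exists s; split=> // y /Hs /H. Qed.

Lemma gen_single (X : natset) x : X x -> gen X x.
Proof.
by move=> Xx; exists [:: x]; split; [move=> y; rewrite inE => /eqP -> | rewrite /= addn0].
Qed.

Lemma bound S F x : frobenius S F -> setdiff S (theta S) x -> x < F.
Proof.
move=> Hf [Sx nth]; have [nF hF] := Hf.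
case: (ltngtP x F) => // H.
- by exfalso; apply: nth; right; exists F.
- by subst.
Qed.

Lemma card_of (A : natset) N : (forall x, A x -> x < N) -> exists n, card_is A n.
Proof.
move=> H; exists (size (filter (fun x => dec (A x)) (iota 0 N))).
exists (filter (fun x => dec (A x)) (iota 0 N)).
split; first by rewrite filter_uniq // iota_uniq.
split=> // x; rewrite mem_filter mem_iota leq0n add0n /=; split.
- by move/andP=> [d _]; move: d; rewrite /dec; case: excluded_middle_informative.
- move=> Ax; rewrite H // andbT /dec; by case: excluded_middle_informative.
Qed.

Lemma card_lt (A B : natset) n k : card_is A n -> card_is B k ->
  (forall x, A x -> B x) -> forall y, B y -> ~ A y -> n < k.
Proof.
move=> [sA [uA [<- hA]]] [sB [uB [<- hB]]] sub y By nAy.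
have : size (y :: sA) <= size sB.
  apply: uniq_leq_size; first by rewrite /= uA andbT; apply/negP => /hA.
  move=> z; rewrite inE => /orP [/eqP -> | /hA /sub /hB] //; exact/hB.
by [].
Qed.

Theorem proposition41 (F : nat) (HF : 0 < F) :
  card_is (setdiff (CF F) (theta (CF F))) ((F - 1) %/ 2)
  /\
  (forall (P Q : natset) (mQ : nat),
      irreducible P -> frobenius P F ->
      irreducible Q -> frobenius Q F ->
      multiplicity Q mQ -> 2 * mQ < F ->
      (forall x, P x <-> ((Q x /\ x <> mQ) \/ x = F - mQ)) ->
      exists nQ nP, card_is (setdiff Q (theta Q)) nQ /\
                    card_is (setdiff P (theta P)) nP /\ nQ < nP).
Proof.
split.
- have [k Hk] : exists k, F = k.*2 \/ F = k.*2.+1.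
    exists F./2; move: (odd_double_half F); case: (odd F) => /= E; [right|left]; lia.
  have Hb : forall x, (if odd F then F + 1 <= 2 * x else F + 2 <= 2 * x) <-> k < x.
    move=> x; case: Hk => ->; rewrite ?odd_double /= ?odd_double /=; split; lia.
  have Hfr : frobenius (CF F) F.
    split; first by case=> [|[]]; lia.
    move=> x Hx; right; split; [lia | apply/Hb]; case: Hk => ?; lia.
  exists (iota k.+1 (F - k.+1)); split; first exact: iota_uniq.
  split; first by rewrite size_iota; case: Hk => ->; lia.
  move=> x; rewrite mem_iota; split.
  + move=> /andP [h1 h2]; have h3 : x < F by lia.
    split.
      right; split; [lia | apply/Hb; lia].
    case.
      move=> Hg; have := gen_zero Hg; move=> /(_ _) H0.
      suff : x = 0 by lia.
      apply: H0 => y [[->|[_ /Hb hy]] [F' [HF' hlt]]] //.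
      have E := frob_uniq HF' Hfr; subst F'; lia.
    move=> [F' [HF' hlt]]; have E := frob_uniq HF' Hfr; subst F'; lia.
  + move=> Hx; have hxF := bound Hfr Hx.
    case: Hx => [[x0|[_ /Hb hx]] nth].
      by exfalso; apply: nth; left; exists [::]; split.
    apply/andP; split; lia.
- move=> P Q m irrP frP irrQ frQ [Qm [m0 mmin]] hm HPQ.
  have numQ : numerical Q by case: irrQ.
  have nQFm : ~ Q (F - m).
    move=> h; case: frQ => nQF _; apply: nQF.
    have [_ [Hadd _]] := numQ; have := Hadd _ _ h Qm; have -> : F - m + m = F by lia. done.
  have DPQ : forall y, Delta P y -> Delta Q y.
    move=> y [Py [F' [HF' hlt]]]; have E := frob_uniq HF' frP; subst F'.
    split; last by exists F.
    by case/HPQ: Py => [[]|] // E; subst y; lia.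
  have sub : forall x, setdiff Q (theta Q) x -> setdiff P (theta P) x.
    move=> x Hx; have hxF := bound frQ Hx; case: Hx => Qx nth.
    have h2 : F <= 2 * x.
      case: (leqP F (2 * x)) => // hl; exfalso; apply: nth; left.
      by apply: gen_single; split=> //; exists F.
    split; first by apply/HPQ; left; split=> //; lia.
    case.
      by move=> Hg; apply: nth; left; apply: gen_mono Hg DPQ.
    by move=> [F' [HF' hlt]]; have E := frob_uniq HF' frP; subst F'; lia.
  have [nQ cQ] := card_of (fun x h => bound frQ h).
  have [nP cP] := card_of (fun x h => bound frP h).
  exists nQ, nP; split=> //; split=> //.
  apply: (card_lt cQ cP sub (y := F - m)); last by case.
  split; first by apply/HPQ; right.
  case.
    move=> Hg; apply: nQFm; apply: (gen_in Hg) => //.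
    by move=> y /DPQ [].
  by move=> [F' [HF' hlt]]; have E := frob_uniq HF' frP; subst F'; lia.
Qed.
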